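(* If $\diamondsuit$ holds, then the space $\sigma(2^{\omega_1})=\{x\in 2^{\omega_1}:|x^{-1}(1)|<\omega\}$, as a subspace of the Cantor cube $2^{\omega_1}$, is not discretely discretely generated.
   Context: A space $X$ is discretely discretely generated (DDG) if for every set $A\subseteq X$ and every discrete set $D\subseteq\overline{A}$ there is a discrete set $E\subseteq A$ with $D\subseteq\overline{E}$. $\diamondsuit$ is Jensen's diamond principle. *)

(* Defs.v *)
From HB Require Import structures.
From mathcomp Require Import all_boot all_order all_algebra.
From mathcomp Require Import all_classical all_reals all_analysis.
Set Implicit Arguments. Unset Strict Implicit. Unset Printing Implicit Defensive.
Local Open Scope classical_set_scope.

(** [lt] is a strict well-order on [W] whose order type is omega_1:
    [W] is uncountable and every proper initial segment is countable. *)
Definition is_omega1 (W : Type) (lt : W -> W -> Prop) : Prop :=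
  (forall x, ~ lt x x) /\
  (forall x y z, lt x y -> lt y z -> lt x z) /\
  (forall x y, lt x y \/ x = y \/ lt y x) /\
  well_founded lt /\
  ~ countable [set: W] /\
  (forall x, countable [set y | lt y x]).

(** [C] is closed and unbounded in omega_1. Closed: whenever
    alpha > 0 and [C] is cofinal below alpha (i.e. sup (C ∩ alpha) = alpha),
    alpha ∈ C. *)
Definition club (W : Type) (lt : W -> W -> Prop) (C : set W) : Prop :=
  (forall a, exists c, C c /\ lt a c) /\
  (forall a, (exists b, lt b a) ->
     (forall b, lt b a -> exists c, [/\ C c, lt b c & lt c a]) -> C a).

Definition stationary (W : Type) (lt : W -> W -> Prop) (S : set W) : Prop :=
  forall C, club lt C -> exists a, C a /\ S a.

Definition diamond (W : Type) (lt : W -> W -> Prop) : Prop :=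
  exists A : W -> set W,
    (forall a, A a `<=` [set b | lt b a]) /\
    (forall X : set W,
       stationary lt [set a | X `&` [set b | lt b a] = A a]).

Definition discrete_subset (T : topologicalType) (D : set T) : Prop :=
  forall x, D x -> exists U : set T, [/\ open U, U x & U `&` D = [set x]].

Definition DDG (T : topologicalType) : Prop :=
  forall (A D : set T), discrete_subset D -> D `<=` closure A ->
    exists E : set T, [/\ E `<=` A, discrete_subset E & D `<=` closure E].

Definition cantor_cube (W : Type) := prod_topology (fun _ : W => bool).

Definition sigma_set (W : Type) : set (cantor_cube W) :=
  [set x | finite_set [set w | x w = true]].

(* Main.v *)
Require Import Defs.
From HB Require Import structures.
From mathcomp Require Import all_boot all_order all_algebra.
From mathcomp Require Import all_classical all_reals all_analysis.
From Stdlib Require List.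
Set Implicit Arguments. Unset Strict Implicit. Unset Printing Implicit Defensive.
Local Open Scope classical_set_scope.

Lemma list_finite0 T (l : list T) : finite_set [set x | List.In x l].
Proof.
elim: l => [|a l IH].
  by apply: (sub_finite_set (B := set0)) => // x [].
apply: (sub_finite_set (B := [set a] `|` [set x | List.In x l])).
  by move=> x /= [->|h]; [left|right].
by rewrite finite_setU; split => //; exact: finite_set1.
Qed.

Lemma list_finite T (S : set T) (l : list T) : (forall x, S x -> List.In x l) -> finite_set S.
Proof. by move=> h; apply: (sub_finite_set h); exact: list_finite0. Qed.

Lemma pigeon T (F : nat -> set T) (l : list T) :
  (forall i j x, i <> j -> F i x -> F j x -> False) ->
  exists N, forall n, (N <= n)%N -> forall k, List.In k l -> ~ F n k.
Proof.
move=> dj; elim: l => [|a l [N IH]].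
  by exists 0%N => n _ k [].
case: (pselect (exists n0, F n0 a)) => [[n0 hn0]|nex].
  exists (maxn N n0.+1) => n; rewrite geq_max => /andP [h1 h2] k [<-|hk].
    move=> hn; apply: (dj n n0 a) => //; move=> e; rewrite e ltnn in h2; by [].
  exact: IH.
exists N => n hn k [<-|hk].
  by move=> h; apply: nex; exists n.
exact: IH.
Qed.

Definition ind W (S : set W) : cantor_cube W := fun w => `[< S w >].

Lemma ind_sig W (S : set W) (l : list W) : (forall x, S x -> List.In x l) ->
  ind S \in @sigma_set W.
Proof.
move=> h; apply: mem_set; rewrite /sigma_set /=.
have -> : [set w | ind S w = true] = S.
  by apply/seteqP; split => w /=; [move/asboolP|move=> hw; apply/asboolP].
exact: list_finite h.
Qed.

Lemma indE W (S T : set W) k : ind S k = ind T k <-> (S k <-> T k).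
Proof.
rewrite /ind; split; first exact: asbool_eq_equiv.
exact: asbool_equiv_eq.
Qed.

Lemma ind_true W (S : set W) k : ind S k = true <-> S k.
Proof. by rewrite /ind; split; [move/asboolP|move=> h; apply/asboolP]. Qed.
Section T.
Variable W : Type.
Definition cyl (f : W -> bool) (l : list W) : set (cantor_cube W) :=
  [set g | forall k, List.In k l -> g k = f k].
Definition cylF (f : W -> bool) : set_system (cantor_cube W) :=
  [set V | exists l, cyl f l `<=` V].
Lemma cylF_filter f : Filter (cylF f).
Proof.
constructor.
- by exists nil.
- move=> P Q [l1 h1] [l2 h2]; exists (l1 ++ l2) => g hg; split.
  + by apply: h1 => k hk; apply: hg; apply: List.in_or_app; left.
  + by apply: h2 => k hk; apply: hg; apply: List.in_or_app; right.
- by move=> P Q PQ [l h]; exists l => g /h /PQ.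
Qed.
Lemma N2c (f : cantor_cube W) (V : set (cantor_cube W)) : nbhs f V -> exists l, cyl f l `<=` V.
Proof.
have H := @cvg_sup _ _ (fun i => Topological.class (initial_topology (fun f : (W -> bool) => f i))) (cylF f) f (cylF_filter f).
case: H => _ H.
move=> nV.
apply: (H _ V nV) => i A /=.
move=> hA.
rewrite nbhs_simpl.
have := (@nbhsE (initial_topology (fun f : (W -> bool) => f i)) f).
move=> E; rewrite E in hA.
case: hA => B [oB Bf] BA.
case: oB => O oO OB.
exists (cons i nil) => g hg; apply: BA; rewrite -OB /=.
by rewrite /= (hg i (or_introl erefl)); rewrite -OB in Bf.
Qed.
Lemma cyl1 (f : cantor_cube W) (i : W) : nbhs f [set g : cantor_cube W | g i = f i].
Proof.
have h := @proj_continuous {classic W} (fun _ => bool) i f.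
have := h [set f i].
rewrite nbhs_simpl /=. 
move=> H. apply: H.
by apply/principal_filterP.
Qed.
Lemma N1c (f : cantor_cube W) l : nbhs f (cyl f l).
Proof.
elim: l => [|a l IH].
  have -> : cyl f nil = setT by apply/seteqP; split => // g _ k [].
  exact: filterT.
apply: filterS (filterI (cyl1 f a) IH) => g [h1 h2] k [<-|hk]; first by [].
exact: h2.
Qed.
Definition SS := set_type (@sigma_set W).
Definition scyl (p : SS) l : set SS := [set q | cyl (val p) l (val q)].
Lemma N1s (p : SS) l : nbhs p (scyl p l).
Proof.
have := @initial_continuous SS (cantor_cube W) set_val p.
move=> H; apply: (H (cyl (val p) l)).
exact: N1c.
Qed.
Lemma N2s (p : SS) U : nbhs p U -> exists l, scyl p l `<=` U.
Proof.
rewrite nbhsE => -[B [oB Bp] BU].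
case: oB => O oO OB.
have : nbhs (val p) O.
  apply: open_nbhs_nbhs; split => //; rewrite -OB in Bp; exact: Bp.
move=> /N2c [l hl]; exists l => q hq; apply: BU; rewrite -OB; exact: hl.
Qed.
Lemma O1s (p : SS) l : open (scyl p l).
Proof.
rewrite openE => q hq.
have -> : scyl p l = scyl q l.
  apply/seteqP; split => r hr k hk; rewrite hr //; by rewrite hq.
exact: N1s.
Qed.
End T.
Lemma countableU' T (A B : set T) : countable A -> countable B -> countable (A `|` B).
Proof.
move=> cA cB.
have -> : A `|` B = \bigcup_(i in [set: bool]) (if i then A else B).
  apply/seteqP; split => x.
    by case=> h; [exists true | exists false].
  by case=> -[] _ h; [left | right].
apply: bigcup_countable; first exact: countableP.
by move=> [] _.
Qed.

Section Ord.
Variable W : Type.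
Variable ltw : W -> W -> Prop.
Hypothesis irr : forall x, ~ ltw x x.
Hypothesis trans : forall x y z, ltw x y -> ltw y z -> ltw x z.
Hypothesis tri : forall x y, ltw x y \/ x = y \/ ltw y x.
Hypothesis wf : well_founded ltw.
Hypothesis unc : ~ countable [set: W].
Hypothesis cseg : forall x, countable [set y | ltw y x].

Definition lew a b := ltw a b \/ a = b.

Lemma not_lt a b : ~ ltw a b -> lew b a.
Proof. by case: (tri a b) => [h|[->|h]] nh; [case: nh|right|left]. Qed.

Lemma lt_le_trans a b c : ltw a b -> lew b c -> ltw a c.
Proof. by move=> h [h'|<-] //; exact: trans h h'. Qed.
Lemma le_lt_trans a b c : lew a b -> ltw b c -> ltw a c.
Proof. by move=> [h|->] h' //; exact: trans h h'. Qed.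
Lemma lew_trans a b c : lew a b -> lew b c -> lew a c.
Proof. by move=> [h|->] // [h'|<-]; [left; exact: trans h h'|left]. Qed.
Lemma lt_asym a b : ltw a b -> ~ ltw b a.
Proof. by move=> h h'; apply: (irr (trans h h')). Qed.
Lemma le_not_lt a b : lew a b -> ~ ltw b a.
Proof. by case=> [h|->]; [exact: lt_asym|exact: irr]. Qed.

Lemma cseg_le x : countable [set y | lew y x].
Proof.
have -> : [set y | lew y x] = [set y | ltw y x] `|` [set x] by [].
by apply: countableU' => //.
Qed.

Lemma bounded (Y : set W) : countable Y -> exists u, forall y, Y y -> ltw y u.
Proof.
move=> cY; apply: contrapT => nb; apply: unc.
have : [set: W] `<=` \bigcup_(y in Y) [set z | lew z y].
  move=> u _; apply: contrapT => nu; apply: nb; exists u => y Yy.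
  apply: contrapT => nyu; apply: nu; exists y => //; exact: not_lt.
move=> /subset_card_le h; apply: (sub_countable h).
apply: bigcup_countable => // y _; exact: cseg_le.
Qed.

Lemma nomax a : exists b, ltw a b.
Proof.
have [u hu] := bounded (countable1 a); exists u; exact: hu.
Qed.

Lemma wf_min (P : W -> Prop) : (exists x, P x) -> exists m, P m /\ forall y, P y -> ~ ltw y m.
Proof.
move=> [x Px]; apply: contrapT => nm.
suff : forall z, ~ P z by move=> /(_ x).
move=> z; elim/(well_founded_induction wf): z => z IH Pz.
apply: nm; exists z; split => // y Py lyz; exact: (IH y lyz Py).
Qed.

Definition sc (a : W) : W := proj1_sig (cid (wf_min (nomax a))).
Lemma sc_gt a : ltw a (sc a).
Proof. by case: (proj2_sig (cid (wf_min (nomax a)))). Qed.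
Lemma sc_min a y : ltw a y -> lew (sc a) y.
Proof.
move=> h; apply: not_lt; case: (proj2_sig (cid (wf_min (nomax a)))) => _ H.
exact: H.
Qed.
Lemma sc_mono a b : ltw a b -> ltw (sc a) (sc b).
Proof. move=> h; apply: le_lt_trans (sc_min h) (sc_gt b). Qed.
Lemma sc_inj a b : sc a = sc b -> a = b.
Proof.
move=> e; case: (tri a b) => [h|[//|h]].
  by have := sc_mono h; rewrite e => /irr.
by have := sc_mono h; rewrite e => /irr.
Qed.

Definition Lim a := ~ exists b, sc b = a.

Lemma rep_ex a : exists l n, Lim l /\ a = iter n sc l.
Proof.
elim/(well_founded_induction wf): a => a IH.
case: (pselect (Lim a)) => [la|nla]; first by exists a, 0%N.
have [b eb] : exists b, sc b = a by apply: contrapT.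
have hb : ltw b a by rewrite -eb; exact: sc_gt.
have [l [n [ll eq]]] := IH b hb.
by exists l, n.+1; split => //; rewrite -eb eq.
Qed.

Lemma iter_inj l m n k : Lim l -> Lim m -> iter n sc l = iter k sc m -> l = m /\ n = k.
Proof.
move=> Ll Lm; elim: n k => [|n IH] [|k] /= e.
- by [].
- by case: Ll; exists (iter k sc m).
- by case: Lm; exists (iter n sc l).
- by have [-> ->] := IH k (sc_inj e).
Qed.

Lemma iter_lt a n k : (n < k)%N -> ltw (iter n sc a) (iter k sc a).
Proof.
elim: k => [//|k IH]; rewrite ltnS leq_eqVlt => /orP [/eqP ->|h] /=.
  exact: sc_gt.
exact: trans (IH h) (sc_gt _).
Qed.

Lemma iter_le a n : lew a (iter n sc a).
Proof. by case: n => [|n]; [right|left; apply: (iter_lt a (ltn0Sn n))]. Qed.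

Definition repr a := cid (rep_ex a).
Definition cl a : W := proj1_sig (repr a).
Definition idx a : nat := proj1_sig (cid (proj2_sig (repr a))).
Lemma cl_spec a : Lim (cl a) /\ a = iter (idx a) sc (cl a).
Proof. exact: (proj2_sig (cid (proj2_sig (repr a)))). Qed.
Lemma cl_iter l n : Lim l -> cl (iter n sc l) = l /\ idx (iter n sc l) = n.
Proof.
move=> Ll; have [L e] := cl_spec (iter n sc l).
have [-> ->] := iter_inj L Ll (esym e); by [].
Qed.
Lemma cl_le a : lew (cl a) a.
Proof. by have [_ e] := cl_spec a; rewrite {2}e; exact: iter_le. Qed.
Lemma cl_lt a : ~ Lim a -> ltw (cl a) a.
Proof.
move=> nL; have [L e] := cl_spec a; case: (cl_le a) => // E.
by case: nL; rewrite -E.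
Qed.
Lemma Lim_cl a : Lim a -> cl a = a.
Proof. by move=> L; have [-> _] := cl_iter 0 L. Qed.

Definition Cl (F : W -> W) := [set a | (exists b, ltw b a) /\ forall b, ltw b a -> ltw (F b) a].

Lemma Cl_club F : club ltw (Cl F).
Proof.
split; last first.
  move=> a ha hc; split => // b ba.
  have [c [[_ Cc] bc ca]] := hc b ba.
  exact: trans (Cc b bc) ca.
move=> a.
have bex : forall x, exists u, (forall b, lew b x -> ltw (F b) u) /\ ltw x u.
  move=> x.
  have cY : countable ((F @` [set b | lew b x]) `|` [set x]).
    apply: countableU' => //.
    exact: card_le_trans (card_image_le _ _) (cseg_le x).
  have [u hu] := bounded cY; exists u; split.
    by move=> b hb; apply: hu; left; exists b.
  by apply: hu; right.
pose bnd x := proj1_sig (cid (bex x)).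
have bnd1 x b : lew b x -> ltw (F b) (bnd x) by case: (proj2_sig (cid (bex x))) => h _; exact: h.
have bnd2 x : ltw x (bnd x) by case: (proj2_sig (cid (bex x))).
pose sq k := iter k bnd a.
have sqS k : ltw (sq k) (sq k.+1) by exact: bnd2.
have cR : countable (range sq) by exact: card_le_trans (card_image_le _ _) (countableP _).
have [u0 hu0] := bounded cR.
have [c [hc cmin]] := wf_min (P := fun u => forall k, ltw (sq k) u) (ex_intro _ u0 (fun k => hu0 _ (ex_intro2 _ _ k I erefl))).
exists c; split; last by exact: (hc 0%N).
split; first by exists (sq 0%N).
move=> b bc.
have : ~ (forall k, ltw (sq k) b) by move=> h; exact: cmin b h bc.
move=> /existsNP [k /not_lt hk].
exact: trans (bnd1 _ _ hk) (hc k.+1).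
Qed.

Variable Ag : W -> set W.
Hypothesis HAg : forall a, Ag a `<=` [set b | ltw b a].

Definition Dsj (h : W -> set W) (Y : set W) :=
  exists f : nat -> W, (forall n, Y (f n) /\ ~ Lim (f n)) /\
    (forall i j x, i <> j -> h (f i) x -> h (f j) x -> False).
Definition SeqH l (h : W -> set W) : nat -> W :=
  match pselect (Dsj h (Ag l)) with left H => proj1_sig (cid H) | right _ => fun _ => l end.
Definition Par l (h : W -> set W) n : set W :=
  if pselect (Dsj h (Ag l)) then h (SeqH l h n) else set0.
Definition stepL a (h : W -> set W) : set W :=
  if pselect (Lim a) then set0 else ([set a] `|` [set cl a]) `|` Par (cl a) h (idx a).
Definition cut l (g : W -> set W) : W -> set W :=
  fun b => if pselect (ltw b l) then g b else set0.
Definition tot a (rec : forall b, ltw b a -> set W) : W -> set W :=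
  fun b => match pselect (ltw b a) with left p => rec b p | right _ => set0 end.
Definition G : W -> set W :=
  Fix wf (fun _ => set W) (fun a rec => stepL a (cut (cl a) (tot rec))).

Lemma GE a : G a = stepL a (cut (cl a) G).
Proof.
rewrite /G Fix_eq; last first.
  move=> x f g fg; congr (stepL x (cut (cl x) _)).
  apply: functional_extensionality_dep => b; rewrite /tot.
  by case: pselect => // p; rewrite fg.
congr (stepL a _); apply: functional_extensionality_dep => b; rewrite /cut /tot.
case: pselect => // h; case: pselect => // h'.
by case: h'; exact: lt_le_trans h (cl_le a).
Qed.

Definition DS l := Dsj (cut l G) (Ag l).
Definition Seq l := SeqH l (cut l G).

Lemma cutE l b : ltw b l -> cut l G b = G b.
Proof. by rewrite /cut; case: pselect. Qed.

Lemma Seq_spec l : DS l -> (forall n, Ag l (Seq l n) /\ ~ Lim (Seq l n)) /\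
  (forall i j x, i <> j -> G (Seq l i) x -> G (Seq l j) x -> False).
Proof.
move=> H; rewrite /Seq /SeqH; case: pselect => // H'.
case: (proj2_sig (cid H')) => h1 h2; split => // i j x ij hi hj.
apply: (h2 i j x ij).
  by rewrite cutE //; apply: HAg; case: (h1 i).
by rewrite cutE //; apply: HAg; case: (h1 j).
Qed.

Lemma G_lim a : Lim a -> G a = set0.
Proof. by move=> L; rewrite GE /stepL; case: (pselect (Lim a)). Qed.

Lemma G_tag a x : ~ Lim a ->
  (G a x <-> x = a \/ x = cl a \/ (DS (cl a) /\ G (Seq (cl a) (idx a)) x)).
Proof.
move=> nL; rewrite [G a]GE /stepL; case: (pselect (Lim a)) => [//|_] /=.
rewrite /Par /DS /Seq; case: (pselect (Dsj (cut (cl a) G) (Ag (cl a)))) => H /=.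
  have Hs := Seq_spec H; rewrite /Seq in Hs.
  rewrite cutE; last by apply: HAg; case: (Hs.1 (idx a)).
  split; first by case=> [[->|->]|h]; [left|right;left|right;right].
  by case=> [->|[->|[_ h]]]; [left;left|left;right|right].
split; first by case=> [[->|->]|[]]; [left|right;left].
by case=> [->|[->|[h _]]]; [left;left|left;right|case: H].
Qed.

Lemma Gmax a x : G a x -> lew x a.
Proof.
elim/(well_founded_induction wf): a x => a IH x.
case: (pselect (Lim a)) => [L|nL]; first by rewrite G_lim.
move/(G_tag x nL) => [->|[->|[H h]]]; first by right.
  by left; exact: cl_lt.
have [s _] := Seq_spec H.
have hb : ltw (Seq (cl a) (idx a)) (cl a) by apply: HAg; case: (s (idx a)).
have hl := trans hb (cl_lt nL).
left; exact: le_lt_trans (IH _ hl _ h) hl.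
Qed.

Lemma Glist a : exists l : list W, forall x, G a x <-> List.In x l.
Proof.
elim/(well_founded_induction wf): a => a IH.
case: (pselect (Lim a)) => [L|nL].
  by exists nil; rewrite G_lim.
case: (pselect (DS (cl a))) => H.
  have [s _] := Seq_spec H.
  have hb : ltw (Seq (cl a) (idx a)) (cl a) by apply: HAg; case: (s (idx a)).
  have [l hl] := IH _ (trans hb (cl_lt nL)).
  exists (a :: cl a :: l) => x; rewrite (G_tag x nL) /= -hl.
  split; first by case=> [->|[->|[_ h]]]; [left|right;left|right;right].
  by case=> [->|[->|h]]; [left|right;left|right;right].
exists (a :: cl a :: nil) => x; rewrite (G_tag x nL) /=.
split; first by case=> [->|[->|[h _]]]; [left|right;left|case: H].
by case=> [->|[->|[]]]; [left|right;left].
Qed.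

Lemma GLim a d : Lim d -> G a d -> exists a', ~ Lim a' /\ cl a' = d /\
  G a' `<=` G a /\ (forall x, G a x -> G a' x \/ ltw a' x).
Proof.
move=> Ld; elim/(well_founded_induction wf): a => a IH.
case: (pselect (Lim a)) => [L|nL]; first by rewrite G_lim.
move/(G_tag d nL) => [e|[e|[H h]]].
- by case: nL; rewrite -e.
- by exists a; split => //; split => //; split => // x hx; left.
have [s _] := Seq_spec H.
set b := Seq (cl a) (idx a) in h s *.
have hb : ltw b (cl a) by apply: HAg; case: (s (idx a)).
have [a' [nL' [e [sub hx]]]] := IH _ (trans hb (cl_lt nL)) h.
have a'b : lew a' b by apply: Gmax; apply: sub; apply/(G_tag a' nL'); left.
exists a'; split => //; split => //; split.
  by move=> x /sub hxb; apply/(G_tag x nL); right; right.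
move=> x /(G_tag x nL) [->|[->|[_ hxb]]]; last exact: hx.
- by right; exact: le_lt_trans a'b (trans hb (cl_lt nL)).
- by right; exact: le_lt_trans a'b hb.
Qed.


Lemma list_bound (l : list W) : exists u, forall k, List.In k l -> ltw k u.
Proof.
have : countable [set k | List.In k l].
  by apply: finite_set_countable; exact: (list_finite (l := l)).
by move/bounded.
Qed.

Lemma lim_unb u : exists d, Lim d /\ ltw u d.
Proof.
have [c [[_ hc] uc]] := (Cl_club sc).1 u.
exists c; split => // -[b eb].
have bc : ltw b c by rewrite -eb; exact: sc_gt.
by have := hc b bc; rewrite eb; exact: irr.
Qed.

Definition mx x y := if pselect (ltw x y) then y else x.
Lemma mx_l x y : lew x (mx x y).
Proof. by rewrite /mx; case: pselect => h; [left|right]. Qed.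
Lemma mx_r x y : lew y (mx x y).
Proof. by rewrite /mx; case: pselect => h; [right|apply: not_lt]. Qed.

Lemma Gsig a : ind (G a) \in @sigma_set W.
Proof. have [l hl] := Glist a; apply: (ind_sig (l := l)) => x; exact: (hl x).1. Qed.
Lemma singsig l : ind [set l] \in @sigma_set W.
Proof. by apply: (ind_sig (l := l :: nil)) => x ->; left. Qed.

Definition ptG a : SS W := exist _ (ind (G a)) (Gsig a).
Definition ptl l : SS W := exist _ (ind [set l]) (singsig l).

Definition Aset : set (SS W) := [set p | exists a, ~ Lim a /\ val p = ind (G a)].
Definition Dset : set (SS W) := [set p | exists l, Lim l /\ val p = ind [set l]].

Lemma D_disc : discrete_subset Dset.
Proof.
move=> p [l [Ll ep]]; exists (scyl p (l :: nil)); split.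
- exact: O1s.
- by move=> k.
apply/seteqP; split => q.
  move=> [hq [l' [Ll' eq']]].
  have : val q l = val p l by apply: hq; left.
  rewrite eq' ep => /indE [_ /(_ erefl)] e.
  apply: val_inj; by rewrite eq' ep -e.
move=> -> ; split; last by exists l.
by move=> k.
Qed.

Lemma D_cl : Dset `<=` closure Aset.
Proof.
move=> p [l [Ll ep]] B /N2s [K hK].
have dj1 : forall i j x, i <> j -> [set iter i.+1 sc l] x -> [set iter j.+1 sc l] x -> False.
  move=> i j x ij hx hy; have e : iter i.+1 sc l = iter j.+1 sc l.
    by rewrite -hx -hy.
  case: (ltngtP i j) => h.
  - by have := iter_lt l (h : (i.+1 < j.+1)%N); rewrite e => /irr.
  - by have := iter_lt l (h : (j.+1 < i.+1)%N); rewrite e => /irr.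
  - by apply: ij.
pose F2 n := if pselect (DS l) then G (Seq l n.+1) else set0.
have dj2 : forall i j x, i <> j -> F2 i x -> F2 j x -> False.
  move=> i j x ij; rewrite /F2; case: pselect => // H.
  have [_ d] := Seq_spec H; apply: d => e; apply: ij; by case: e.
have [N1 h1] := pigeon K dj1.
have [N2 h2] := pigeon K dj2.
pose n := maxn N1 N2.
pose a := iter n.+1 sc l.
have nLa : ~ Lim a by apply; exists (iter n sc l).
have [ca ia] := cl_iter n.+1 Ll.
exists (ptG a); split; first by exists a.
apply: hK => k hk /=; rewrite ep; apply/indE; split.
  move/(G_tag k nLa) => [e|[e|[H hG]]].
  - by case: (h1 n (leq_maxl _ _) k hk); rewrite e.
  - by rewrite e ca.
  - case: (h2 n (leq_maxr _ _) k hk); rewrite /F2.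
    have H' : DS l by rewrite -ca.
    case: (pselect (DS l)) => [_|//] /=.
    by move: hG; rewrite ca ia.
move=> ->; apply/(G_tag l nLa); right; left; by rewrite ca.
Qed.

Hypothesis Hst : forall X : set W, stationary ltw [set a | X `&` [set b | ltw b a] = Ag a].

Lemma no_E (E : set (SS W)) : E `<=` Aset -> discrete_subset E -> Dset `<=` closure E -> False.
Proof.
move=> EA Edisc DclE.
pose X := [set b | ~ Lim b /\ exists e, E e /\ val e = ind (G b)].
have W1 : forall d, Lim d -> forall K : list W, exists a, X a /\ G a d /\
    forall k, List.In k K -> k <> d -> ~ G a k.
  move=> d Ld K.
  have Dp : Dset (ptl d) by exists d.
  have := DclE _ Dp _ (N1s (ptl d) (d :: K)).
  move=> [e [Ee ce]].
  have [a [nLa ea]] := EA e Ee.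
  exists a; split; first by split => //; exists e.
  have hk : forall k, List.In k (d :: K) -> (G a k <-> k = d).
    move=> k hk; have := ce k hk; rewrite ea /= => /indE; by [].
  split; first by apply/(hk d); [left|].
  move=> k kK kd Gk; apply: kd; apply/(hk k) => //; by right.
have stepU : forall U : list W, exists b, X b /\ forall k, List.In k U -> ~ G b k.
  move=> U; have [u hu] := list_bound U.
  have [d [Ld ud]] := lim_unb u.
  have [a [Xa [_ ha]]] := W1 d Ld U.
  exists a; split => // k kU; apply: ha => // e.
  by have := trans (hu k kU) ud; rewrite e => /irr.
pose sU U := proj1_sig (cid (stepU U)).
have sU1 U : X (sU U) by case: (proj2_sig (cid (stepU U))).
have sU2 U k : List.In k U -> ~ G (sU U) k by case: (proj2_sig (cid (stepU U))) => _; exact.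
pose gl b := proj1_sig (cid (Glist b)).
have glP b x : G b x -> List.In x (gl b) by move=> h; exact: ((proj2_sig (cid (Glist b))) x).1.
pose Us k := iter k (fun U => U ++ gl (sU U)) nil.
pose bs k := sU (Us k).
have Us_mono : forall j k x, (j <= k)%N -> List.In x (Us j) -> List.In x (Us k).
  move=> j k x; elim: k => [|k IH].
    by rewrite leqn0 => /eqP ->.
  rewrite leq_eqVlt => /orP [/eqP ->|h] //.
  move=> hx; rewrite /Us /= -/(Us k); apply: List.in_or_app; left; exact: IH.
have bs_dj : forall i j x, i <> j -> G (bs i) x -> G (bs j) x -> False.
  have key : forall i j x, (i < j)%N -> G (bs i) x -> G (bs j) x -> False.
    move=> i j x ij hi hj; apply: (sU2 (Us j) x) => //.
    apply: (Us_mono i.+1) => //; rewrite /Us /= -/(Us i).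
    apply: List.in_or_app; right; exact: glP.
  move=> i j x ij; case: (ltngtP i j) => h.
  - exact: key.
  - by move=> a b; exact: key h b a.
  - by case: ij.
have cR : countable (range bs) by exact: card_le_trans (card_image_le _ _) (countableP _).
have [b0 hb0] := bounded cR.
have bsb0 k : ltw (bs k) b0 by apply: hb0; exists k.
pose S d := Lim d /\ ltw b0 d /\ X `&` [set b | ltw b d] = Ag d.
pose P d (b : W) := X b /\ ltw b d /\ exists a, X a /\ G a d /\ G b `<=` G a /\
  forall x, G a x -> ~ G b x -> lew d x.
have C1 : forall d, exists b, S d -> P d b.
  move=> d; case: (pselect (S d)) => [[Ld [b0d Sd]]|nS]; last by exists d.
  have DSd : DS d.
    exists bs; split.
      move=> n; rewrite -Sd; split; first by split; [exact: sU1|exact: trans (bsb0 n) b0d].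
      by case: (sU1 (Us n)).
    move=> i j x ij; rewrite !cutE; first exact: bs_dj.
    - exact: trans (bsb0 j) b0d.
    - exact: trans (bsb0 i) b0d.
  have [a [Xa [Gad _]]] := W1 d Ld nil.
  have [a' [nLa' [ca' [sub hx]]]] := GLim Ld Gad.
  pose b := Seq d (idx a').
  have [Hs _] := Seq_spec DSd.
  have := (Hs (idx a')).1; rewrite -Sd => -[Xb bd].
  exists b => _; split => //; split => //; exists a; split => //; split => //.
  have Ga'b : G b `<=` G a'.
    move=> x hx'; apply/(G_tag x nLa'); right; right; rewrite ca'; by split.
  split; first by move=> x /Ga'b /sub.
  have da' : ltw d a' by rewrite -ca'; exact: cl_lt.
  move=> x /hx [/(G_tag x nLa') [->|[->|[H hG]]]|lx] nb.
  - by left.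
  - by right; rewrite ca'.
  - by case: nb; rewrite ca' in hG.
  - by left; exact: trans da' lx.
pose rr d := proj1_sig (cid (C1 d)).
have rrP d : S d -> P d (rr d) := proj2_sig (cid (C1 d)).
have C2 : exists b, forall a, exists d, S d /\ ltw a d /\ rr d = b.
  apply: contrapT => nC.
  have H1 : forall b, exists a, forall d, S d -> rr d = b -> ~ ltw a d.
    move=> b; apply: contrapT => nb; apply: nC; exists b => a.
    apply: contrapT => na; apply: nb; exists a => d Sd e ad; apply: na.
    by exists d.
  pose aa b := proj1_sig (cid (H1 b)).
  have aaP b : forall d, S d -> rr d = b -> ~ ltw (aa b) d := proj2_sig (cid (H1 b)).
  pose F b := mx (mx (sc (aa b)) (sc b)) (sc b0).
  have [d [[[b bd] Cd] Sd]] := Hst X (Cl_club F).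
  have Ld : Lim d.
    move=> [c ec]; have cd : ltw c d by rewrite -ec; exact: sc_gt.
    have := Cd c cd; apply: le_not_lt; rewrite -ec.
    exact: lew_trans (mx_r _ _) (mx_l _ _).
  have b0d : ltw b0 d.
    apply: trans (sc_gt b0) _; apply: le_lt_trans (mx_r _ _) (Cd b bd).
  have Sdd : S d by split => //; split.
  have [_ [rd _]] := rrP d Sdd.
  apply: (aaP (rr d) d Sdd erefl).
  apply: trans (sc_gt _) _; apply: le_lt_trans _ (Cd _ rd).
  exact: lew_trans (mx_l _ _) (mx_l _ _).
have [b Hb] := C2.
have [d0 [Sd0 [_ e0]]] := Hb b0.
have [[_ [e [Ee ee]]] _] : P d0 b by rewrite -e0; exact: rrP.
have [U [oU Ue UE]] := Edisc e Ee.
have [K hK] := N2s (open_nbhs_nbhs (conj oU Ue)).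
have [u hu] := list_bound K.
have [d [Sd [ud rd]]] := Hb u.
have [_ [bd [a [[_ [e' [Ee' ee']]] [Gad [sub df]]]]]] : P d b by rewrite -rd; exact: rrP.
have Ue' : (U `&` E) e'.
  split => //; apply: hK => k hk /=; rewrite ee' ee; apply/indE; split; last exact: sub.
  move=> Gk; apply: contrapT => nG.
  exact: (le_not_lt (df k Gk nG) (trans (hu k hk) ud)).
rewrite UE in Ue'.
have : G b d.
  have : val e' d = val e d by rewrite Ue'.
  by rewrite ee' ee => /indE [] /(_ Gad).
move/Gmax => h; exact: (le_not_lt h bd).
Qed.

End Ord.

Theorem theorem6p10 (W : Type) (lt : W -> W -> Prop) :
  is_omega1 lt -> diamond lt ->
  ~ DDG (set_type (@sigma_set W)).
Proof.
move=> [irr [trans [tri [wf [unc cseg]]]]] [Ag [HAg Hst]] H.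
have Dd := @D_disc W lt tri wf unc cseg.
have Dc := @D_cl W lt irr trans tri wf unc cseg Ag HAg.
have [E [EA Edisc DE]] := H _ _ Dd Dc.
exact: (@no_E W lt irr trans tri wf unc cseg Ag HAg Hst E EA Edisc DE).
Qed.
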